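(* In the discrete setting of the context, let $\varphi$ be a twice continuously differentiable convex function on $(0,+\infty)$, let $(\rho_K^n)$ be positive, and let the normal face velocities be $u_{K,\sigma}^n={\boldsymbol u}_\sigma^n\cdot{\boldsymbol n}_{K,\sigma}$ for a discrete face velocity field $({\boldsymbol u}_\sigma^n)$. For $K\in\mathcal M$, $0\le n\le N-1$, let $\tilde\rho_K^{n+1/2}\in|\hspace{-0.12em}[\rho_K^n,\rho_K^{n+1}]\hspace{-0.12em}|$ satisfy $\varphi'(\rho_K^{n+1})-\varphi'(\rho_K^n)=\varphi''(\tilde\rho_K^{n+1/2})(\rho_K^{n+1}-\rho_K^n)$, and define \[ |K|\,(R_{01})_K^{n+1}=\varphi''(\tilde\rho_K^{n+1/2})(\rho_K^{n+1}-\rho_K^n)\,\rho_K^n\sum_{\sigma\in\mathcal{E}(K)}|\sigma|\,u_{K,\sigma}^n. \] Let $M>1$ and suppose $\rho_K^n\le M$ and $1/\rho_K^n\le M$ for all $K$ and $0\le n\le N$; let $|\varphi''|_\infty$ be the maximum of $\varphi''$ on $[1/M,M]$. Then for any $p\ge1$, $q\ge1$ with $1/p+1/q=1$, \[ \|R_{01}\|_{L^1}\le C\,C_{\mathcal M}\,M^{(2p-1)/p}\,|\varphi''|_\infty\,\|\rho\|_{t,BV}^{1/p}\,\|{\boldsymbol u}\|_{L^q(0,T;W^{1,q}_{\mathcal M})}\,\delta t^{1/p}, \] where $C>0$ depends only on the maximal number of faces of the mesh cells.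
   Context: Setting: $\Omega\subset\mathbb{R}^d$ bounded, $\mathcal M$ a polytopal mesh with cells $K$ (with a bounded number of faces), faces of $K$ denoted $\mathcal E(K)$, measures $|K|$, $|\sigma|$, $h_K={\rm diam}(K)$, ${\boldsymbol n}_{K,\sigma}$ the unit normal to $\sigma$ outward $K$; uniform time step $\delta t$, $0\le n\le N$. Notation $|\hspace{-0.12em}[a,b]\hspace{-0.12em}|=[\min(a,b),\max(a,b)]$. $\|R\|_{L^1}=\sum_{n=0}^{N-1}\delta t\sum_K|K|\,|R_K^{n+1}|$. $\|z\|_{t,BV}=\sum_n\sum_K|K|\,|z_K^{n+1}-z_K^n|$. For a face velocity field with components $u_{\sigma,i}^n$, \[ \|{\boldsymbol u}\|^q_{L^q(0,T;W^{1,q}_{\mathcal M})}=\sum_{i=1}^d\sum_{n=0}^N\delta t\sum_{K\in\mathcal M}\sum_{(\sigma,\sigma')\in\mathcal{E}(K)^2}|K|\Bigl|\frac{u_{\sigma,i}^n-u_{\sigma',i}^n}{h_K}\Bigr|^q, \] and $C_{\mathcal M}=\max_{K\in\mathcal M,(\sigma,\sigma')\in\mathcal{E}(K)^2}\frac{(|\sigma|+|\sigma'|)h_K}{|K|}$. *)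

(* Defs.v *)
From HB Require Import structures.
From mathcomp Require Import all_boot all_order all_algebra.
From mathcomp Require Import all_classical all_reals all_analysis.
Set Implicit Arguments. Unset Strict Implicit. Unset Printing Implicit Defensive.
Import Order.TTheory GRing.Theory Num.Theory.
Import numFieldNormedType.Exports.
Local Open Scope ring_scope.

(* The geometric
   closure identity  sum_{sigma in E(K)} |sigma| n_{K,sigma} = 0  (divergence
   theorem for a polytope) is recorded as an axiom of the structure. *)
Record mesh (R : realType) (d : nat) := Mesh {
  cell : finType;
  face : finType;
  faces : cell -> {set face};
  vol : cell -> R;
  area : face -> R;
  diam : cell -> R;
  nrm : cell -> face -> 'I_d -> R;
  vol_gt0 : forall K, 0 < vol K;
  area_gt0 : forall s, 0 < area s;
  diam_gt0 : forall K, 0 < diam K;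
  nrm_unit : forall K s, s \in faces K -> \sum_(i < d) nrm K s i ^+ 2 = 1;
  nrm_closed : forall K (i : 'I_d),
      \sum_(s in faces K) area s * nrm K s i = 0
}.

Section Defs.
Variables (R : realType) (d : nat) (Ms : mesh R d).

Definition unorm (u : face Ms -> 'I_d -> R) (K : cell Ms) (s : face Ms) : R :=
  \sum_(i < d) u s i * nrm K s i.

Definition C_mesh : R :=
  \big[Num.max/0]_(K : cell Ms)
    \big[Num.max/0]_(s in faces K)
      \big[Num.max/0]_(s' in faces K)
        ((area s + area s') * diam K / vol K).

(* ||R||_{L^1} = sum_{n=0}^{N-1} dt sum_K |K| |R_K^{n+1}| ; Rf n K = R_K^{n+1} *)
Definition L1norm (N : nat) (dt : R) (Rf : nat -> cell Ms -> R) : R :=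
  \sum_(n < N) dt * \sum_(K : cell Ms) vol K * `|Rf n K|.

Definition tBV (N : nat) (z : nat -> cell Ms -> R) : R :=
  \sum_(n < N) \sum_(K : cell Ms) vol K * `|z n.+1 K - z n K|.

Definition W1q_norm (N : nat) (dt q : R) (u : nat -> face Ms -> 'I_d -> R) : R :=
  (\sum_(i < d) \sum_(n < N.+1) dt * \sum_(K : cell Ms)
      \sum_(s in faces K) \sum_(s' in faces K)
        vol K * (`|(u n s i - u n s' i) / diam K| `^ q)) `^ (1 / q).

(* (R_01)_K^{n+1}, defined by
   |K| (R_01)_K^{n+1} = phi''(rt_K^{n+1/2}) (rho_K^{n+1}-rho_K^n) rho_K^n
                           sum_{sigma in E(K)} |sigma| u_{K,sigma}^n ;
   R01 n K stands for (R_01)_K^{n+1}, rt n K for rt_K^{n+1/2}. *)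
Definition R01 (phi2 : R -> R) (rho rt : nat -> cell Ms -> R)
    (u : nat -> face Ms -> 'I_d -> R) (n : nat) (K : cell Ms) : R :=
  phi2 (rt n K) * (rho n.+1 K - rho n K) * rho n K *
    (\sum_(s in faces K) area s * unorm (u n) K s) / vol K.

End Defs.

Definition convex_pos (R : realType) (phi : R -> R) : Prop :=
  forall x y t : R, 0 < x -> 0 < y -> 0 <= t <= 1 ->
    phi (t * x + (1 - t) * y) <= t * phi x + (1 - t) * phi y.

Definition C2_pos (R : realType) (phi : R -> R) : Prop :=
  forall x : R, 0 < x ->
    [/\ derivable phi x 1, derivable (derive1 phi) x 1
      & {for x, continuous (derive1 (derive1 phi))}].

(* |phi''|_oo = max of phi'' on [1/M, M] (sup of the image of a compact set) *)
Definition sup_phi2 (R : realType) (phi : R -> R) (M : R) : R :=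
  sup [set derive1 (derive1 phi) x | x in [set x : R | M^-1 <= x <= M]]%classic.

(* Main.v *)
Require Import Defs.
From HB Require Import structures.
From mathcomp Require Import all_boot all_order all_algebra.
From mathcomp Require Import all_classical all_reals all_analysis.
From mathcomp Require Import ring lra.
Import Order.TTheory GRing.Theory Num.Theory.
Import numFieldNormedType.Exports.
Local Open Scope ring_scope.
Lemma d2_ge0 (R : realType) (phi : R -> R) : C2_pos phi -> convex_pos phi ->
  forall x, 0 < x -> 0 <= derive1 (derive1 phi) x.
Proof.
move=> hC hc x0 x0p; rewrite leNgt; apply/negP => neg.
have [_ _ cont] := hC x0 x0p.
have := cvgr_lt _ cont _ neg.
rewrite -nbhs_ballE; case => e /= e0 He.
pose r := Num.min e x0 / 2.
have r0 : 0 < r by rewrite divr_gt0 // lt_min e0 x0p.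
have rlt : r < Num.min e x0 by rewrite /r ltr_pdivrMr // ltr_pMr ?ltr1n // lt_min e0 x0p.
have neg' : forall y, x0 - r <= y <= x0 + r -> derive1 (derive1 phi) y < 0.
  move=> y /andP[h1 h2]; apply: He; rewrite /ball /=.
  have : `|x0 - y| <= r by rewrite ler_norml; apply/andP; split; lra.
  move=> h; apply: le_lt_trans h _; apply: lt_le_trans rlt _; by rewrite ge_min lexx.
have mx : Num.min e x0 <= x0 by rewrite ge_min lexx orbT.
have a0 : 0 < x0 - r by lra.
have dphi : forall y : R, 0 < y -> derivable phi y 1 by move=> y /hC[].
have ddphi : forall y : R, 0 < y -> derivable (derive1 phi) y 1 by move=> y /hC[].
have isd : forall y : R, 0 < y -> is_derive y (1:R) phi (derive1 phi y).
  by move=> y /dphi/derivableP; rewrite derive1E.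
have cphi : forall a b : R, 0 < a -> {within `[a, b], continuous phi}%classic.
  move=> a b a0'; apply: derivable_within_continuous => y; rewrite in_itv /= => /andP[h _].
  apply: dphi; lra.
have dec : forall y z : R, x0 - r <= y -> y < z -> z <= x0 + r ->
    derive1 phi z < derive1 phi y.
  apply: ltr0_derive1_decr.
  - move=> y; rewrite in_itv /= => /andP[h _]; apply: ddphi; lra.
  - move=> y; rewrite in_itv /= => /andP[h1 h2]; apply: neg'; lra.
  - apply: derivable_within_continuous => y; rewrite in_itv /= => /andP[h _].
    apply: ddphi; lra.
have isd' : forall a b : R, 0 < a -> forall y, y \in `]a, b[ -> is_derive y (1:R) phi (derive1 phi y).
  move=> a b a0' y; rewrite in_itv /= => /andP[h _]; apply: isd; lra.
have [c1 c1i E1] := MVT (ltac:(lra) : x0 - r < x0) (isd' _ _ a0) (cphi _ _ a0).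
have x0p' : 0 < x0 by [].
have [c2 c2i E2] := MVT (ltac:(lra) : x0 < x0 + r) (isd' _ _ x0p') (cphi _ _ x0p').
move: c1i c2i; rewrite !in_itv /= => /andP[h1 h2] /andP[h3 h4].
have := dec c1 c2 ltac:(lra) ltac:(lra) ltac:(lra).
have := hc (x0 - r) (x0 + r) (2^-1) a0 ltac:(lra) ltac:(lra).
have -> : 2^-1 * (x0 - r) + (1 - 2^-1) * (x0 + r) = x0 by field.
move: E1 E2; set p1 := derive1 phi c1; set p2 := derive1 phi c2 => E1 E2.
nra.
Qed.

Lemma le_sup_phi2 (R : realType) (phi : R -> R) (M x : R) : C2_pos phi -> 1 < M ->
  M^-1 <= x <= M -> derive1 (derive1 phi) x <= sup_phi2 phi M.
Proof.
move=> hC M1 hx.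
have M0 : 0 < M by lra.
have iM0 : 0 < M^-1 by rewrite invr_gt0.
have iMM : M^-1 <= M by move: hx => /andP[? ?]; lra.
have cw : {within `[M^-1, M], continuous (derive1 (derive1 phi))}%classic.
  apply: continuous_in_subspaceT => y; rewrite inE /= in_itv /= => /andP[h _].
  by have [] := hC y ltac:(lra).
have [c ci cmax] := EVT_max iMM cw.
apply: ub_le_sup.
  exists (derive1 (derive1 phi) c) => _ [y /= hy <-]; apply: cmax; by rewrite in_itv.
by exists x.
Qed.

Lemma powR_invK {R : realType} {A p : R} : 0 <= A -> 0 < p -> (A `^ p^-1) `^ p = A.
Proof. by move=> A0 p0; rewrite -powRrM mulVf ?gt_eqF // powRr1. Qed.

Lemma powR_Vr {R : realType} {x : R} (p : R) : 0 <= x -> (x^-1) `^ p = (x `^ p)^-1.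
Proof. by move=> x0; rewrite -powR_inv1 // powRAC powR_inv1 // powR_ge0. Qed.

Lemma holder_fin (R : realType) (I : finType) (w a b : I -> R) (p q : R) :
  0 < p -> 0 < q -> p^-1 + q^-1 = 1 ->
  (forall i, 0 <= w i) -> (forall i, 0 <= a i) -> (forall i, 0 <= b i) ->
  \sum_i w i * a i * b i <=
    (\sum_i w i * a i `^ p) `^ p^-1 * (\sum_i w i * b i `^ q) `^ q^-1.
Proof.
move=> p0 q0 pq w0 a0 b0.
set A := \sum_i w i * a i `^ p; set B := \sum_i w i * b i `^ q.
have A0 : 0 <= A by apply: sumr_ge0 => i _; rewrite mulr_ge0 ?powR_ge0.
have B0 : 0 <= B by apply: sumr_ge0 => i _; rewrite mulr_ge0 ?powR_ge0.
have [Ae|Ap] := eqVneq A 0.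
  rewrite big1 ?(mulr_ge0 (powR_ge0 _ _) (powR_ge0 _ _)) // => i _.
  have /eqP := Ae; rewrite psumr_eq0 => [/allP /(_ i (mem_index_enum i))|j _];
    last by rewrite mulr_ge0 ?powR_ge0.
  rewrite /= mulf_eq0 powR_eq0 => /orP[/eqP->|/andP[/eqP-> _]]; by rewrite !(mul0r, mulr0).
have [Be|Bp] := eqVneq B 0.
  rewrite big1 ?(mulr_ge0 (powR_ge0 _ _) (powR_ge0 _ _)) // => i _.
  have /eqP := Be; rewrite psumr_eq0 => [/allP /(_ i (mem_index_enum i))|j _];
    last by rewrite mulr_ge0 ?powR_ge0.
  rewrite /= mulf_eq0 powR_eq0 => /orP[/eqP->|/andP[/eqP-> _]]; by rewrite !(mul0r, mulr0).
have Apos : 0 < A by rewrite lt_neqAle eq_sym Ap A0.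
have Bpos : 0 < B by rewrite lt_neqAle eq_sym Bp B0.
set al := A `^ p^-1; set be := B `^ q^-1.
have al0 : 0 < al by apply: powR_gt0.
have be0 : 0 < be by apply: powR_gt0.
have alp : al `^ p = A := powR_invK A0 p0.
have beq : be `^ q = B := powR_invK B0 q0.
clearbody al be.
have ab0 : 0 < al * be := mulr_gt0 al0 be0.
suff h : (al * be)^-1 * (\sum_i w i * a i * b i) <= 1.
  have := ler_wpM2l (ltW ab0) h.
  by rewrite mulr1 mulrA (mulfV (lt0r_neq0 ab0)) mul1r.
rewrite mulr_sumr.
have key : forall i, (al * be)^-1 * (w i * a i * b i) <=
    w i * (a i `^ p / A) / p + w i * (b i `^ q / B) / q.
  move=> i.
  have ial : 0 <= al^-1 by rewrite invr_ge0 ltW.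
  have ibe : 0 <= be^-1 by rewrite invr_ge0 ltW.
  have := conjugate_powR (mulr_ge0 (a0 i) ial) (mulr_ge0 (b0 i) ibe) p0 q0 pq.
  rewrite (powRM _ (a0 i) ial) (powRM _ (b0 i) ibe) (powR_Vr _ (ltW al0)) (powR_Vr _ (ltW be0)).
  rewrite alp beq => h.
  have := ler_wpM2l (w0 i) h.
  have -> : (al * be)^-1 * (w i * a i * b i) = w i * (a i * al^-1 * (b i * be^-1)).
    by rewrite invfM; ring.
  have -> : w i * (a i `^ p / A) / p + w i * (b i `^ q / B) / q =
     w i * (a i `^ p * A^-1 / p + b i `^ q * B^-1 / q) by ring.
  by [].
apply: le_trans (ler_sum _ (fun i _ => key i)) _.
rewrite big_split /=.
have -> : \sum_i w i * (a i `^ p / A) / p = A / A / p.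
  by rewrite /A !mulr_suml; apply: eq_bigr => i _; rewrite mulrA.
have -> : \sum_i w i * (b i `^ q / B) / q = B / B / q.
  by rewrite /B !mulr_suml; apply: eq_bigr => i _; rewrite mulrA.
by rewrite !mulfV ?gt_eqF // !mul1r pq.
Qed.

Lemma nest5 (R : realType) (A B C D E : finType) (F : A -> B -> C -> D -> E -> R) :
  \sum_a \sum_b \sum_c \sum_d \sum_e F a b c d e =
  \sum_(x : A * (B * (C * (D * E)))) F x.1 x.2.1 x.2.2.1 x.2.2.2.1 x.2.2.2.2.
Proof.
rewrite -(pair_bigA _ (fun a y => F a y.1 y.2.1 y.2.2.1 y.2.2.2)) /=.
apply: eq_bigr => a _.
rewrite -(pair_bigA _ (fun b y => F a b y.1 y.2.1 y.2.2)) /=.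
apply: eq_bigr => b _.
rewrite -(pair_bigA _ (fun c y => F a b c y.1 y.2)) /=.
apply: eq_bigr => c _.
by rewrite -(pair_bigA _ (fun d e => F a b c d e)) /=.
Qed.

Lemma sum_ind (R : realType) (T : finType) (A : {set T}) (G : T -> R) :
  \sum_(s in A) G s = \sum_s (s \in A)%:R * G s.
Proof.
rewrite big_mkcond; apply: eq_bigr => s _.
by case: (s \in A); rewrite ?mul1r ?mul0r.
Qed.

Lemma C_mesh_ge0 {R : realType} {d} (Ms : mesh R d) : 0 <= C_mesh Ms.
Proof. exact: bigmax_ge_id. Qed.

Lemma C_mesh_ge {R : realType} {d} (Ms : mesh R d) (K : cell Ms) (s s' : face Ms) :
  s \in faces K -> s' \in faces K ->
  (area s + area s') * diam K / vol K <= C_mesh Ms.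
Proof.
move=> hs hs'; rewrite /C_mesh.
apply: le_trans (le_bigmax _ _ K).
apply: le_trans (le_bigmax_cond _ _ hs).
exact: (le_bigmax_cond _ _ hs').
Qed.

Lemma nrm_le1 {R : realType} {d} (Ms : mesh R d) (K : cell Ms) (s : face Ms) (i : 'I_d) :
  s \in faces K -> `|nrm K s i| <= 1.
Proof.
move=> hs; have h := nrm_unit hs.
have : nrm K s i ^+ 2 <= 1.
  rewrite -h (bigD1 i) //= lerDl; apply: sumr_ge0 => j _; exact: sqr_ge0.
move=> h2; rewrite ler_norml; apply/andP; split; nra.
Qed.

Lemma cell_bound (R : realType) d (Ms : mesh R d) (K : cell Ms) (f : face Ms -> 'I_d -> R) :
  `|\sum_(s in faces K) area s * unorm f K s| <=
  C_mesh Ms * vol K * \sum_i \sum_s \sum_s'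
     ((s \in faces K)%:R * (s' \in faces K)%:R * `|(f s i - f s' i) / diam K|).
Proof.
have CM0 := C_mesh_ge0 Ms.
have v0 := vol_gt0 K; have h0 := diam_gt0 K.
have rhs0 : 0 <= \sum_i \sum_s \sum_s'
     ((s \in faces K)%:R * (s' \in faces K)%:R * `|(f s i - f s' i) / diam K| : R).
  by do 3! (apply: sumr_ge0 => ? _); rewrite !mulr_ge0 ?ler0n.
case: (pickP (mem (faces K))) => [s0 hs0|none]; last first.
  rewrite big_pred0 ?normr0; last by move=> s; have := none s.
  by rewrite !mulr_ge0 // ltW.
have -> : \sum_(s in faces K) area s * unorm f K s =
          \sum_(s in faces K) area s * \sum_i (f s i - f s0 i) * nrm K s i.
  have z : \sum_(s in faces K) area s * \sum_i f s0 i * nrm K s i = 0.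
    rewrite (eq_bigr (fun s => \sum_i f s0 i * (area s * nrm K s i))); last first.
      by move=> s _; rewrite mulr_sumr; apply: eq_bigr => i _; rewrite mulrCA.
    rewrite exchange_big /=.
    by rewrite big1 // => i _; rewrite -mulr_sumr nrm_closed mulr0.
  transitivity (\sum_(s in faces K) area s * unorm f K s -
     \sum_(s in faces K) area s * \sum_i f s0 i * nrm K s i); first by rewrite z subr0.
  rewrite -sumrB; apply: eq_bigr => s _.
  rewrite -mulrBr -sumrB /unorm; congr (_ * _); apply: eq_bigr => i _; ring.
have hA : forall s, s \in faces K -> area s <= C_mesh Ms * vol K / diam K.
  move=> s hs; have h1 := @C_mesh_ge _ _ Ms K s s0 hs hs0; have a0 := area_gt0 s0.
  have h2 : area s * diam K / vol K <= C_mesh Ms.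
    apply: le_trans h1; rewrite ler_pM2r ?invr_gt0 // ler_pM2r //; lra.
  have -> : area s = area s * diam K / vol K * (vol K / diam K).
    by field; rewrite ?gt_eqF.
  by rewrite -[X in _ <= X]mulrA ler_pM2r ?divr_gt0.
apply: le_trans (ler_norm_sum _ _ _) _.
apply: (@le_trans _ _ (\sum_(s in faces K) C_mesh Ms * vol K *
   \sum_i `|(f s i - f s0 i) / diam K|)).
  apply: ler_sum => s hs; rewrite normrM (ger0_norm (ltW (area_gt0 s))).
  apply: (@le_trans _ _ (C_mesh Ms * vol K / diam K * \sum_i `|f s i - f s0 i|)).
    apply: ler_pM; [exact: ltW (area_gt0 s) | exact: normr_ge0 | exact: hA | ].
    apply: le_trans (ler_norm_sum _ _ _) _; apply: ler_sum => i _.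
    rewrite normrM -[X in _ <= X]mulr1 ler_wpM2l //; exact: (@nrm_le1 _ _ Ms K s i hs).
  rewrite -mulrA mulr_sumr; apply: ler_wpM2l; first by rewrite mulr_ge0 // ltW.
  apply: ler_sum => i _; rewrite normrM (gtr0_norm (x := (diam K)^-1)) ?invr_gt0 //.
  by rewrite mulrC.
rewrite -mulr_sumr; apply: ler_wpM2l; first by rewrite mulr_ge0 // ltW.
rewrite sum_ind; under eq_bigr do rewrite mulr_sumr.
rewrite exchange_big /=.
apply: ler_sum => i _; apply: ler_sum => s _.
have hs0' : s0 \in faces K := hs0.
rewrite (bigD1 s0) //= hs0' mulr1 -[X in X <= _]addr0.
apply: lerD; first by [].
by apply: sumr_ge0 => s' _; rewrite !mulr_ge0 ?ler0n.
Qed.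

Lemma absdiff_le {R : realType} {x y M : R} : 0 < x -> 0 < y -> x <= M -> y <= M ->
  `|x - y| <= M.
Proof. by move=> *; rewrite ler_norml; apply/andP; split; lra. Qed.

Theorem lemma3p4 (R : realType) (d Nf : nat) :
  exists C : R, 0 < C /\
  forall (Ms : mesh R d) (phi : R -> R) (N : nat) (dt : R)
         (rho rt : nat -> cell Ms -> R) (u : nat -> face Ms -> 'I_d -> R)
         (M p q : R),
    (forall K : cell Ms, #|faces K| <= Nf)%N ->
    0 < dt ->
    C2_pos phi -> convex_pos phi ->
    (forall n K, 0 < rho n K) ->
    (forall n K, (n < N)%N ->
       Num.min (rho n K) (rho n.+1 K) <= rt n K <= Num.max (rho n K) (rho n.+1 K)) ->
    (forall n K, (n < N)%N ->
       derive1 phi (rho n.+1 K) - derive1 phi (rho n K)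
       = derive1 (derive1 phi) (rt n K) * (rho n.+1 K - rho n K)) ->
    1 < M ->
    (forall n K, (n <= N)%N -> rho n K <= M /\ (rho n K)^-1 <= M) ->
    1 <= p -> 1 <= q -> p^-1 + q^-1 = 1 ->
    L1norm N dt (R01 (derive1 (derive1 phi)) rho rt u)
    <= C * C_mesh Ms * M `^ ((2 * p - 1) / p) * sup_phi2 phi M
         * tBV N rho `^ (1 / p) * W1q_norm N dt q u * dt `^ (1 / p).
Proof.
exists (Nf * Nf * d).+1%:R; split; first by rewrite ltr0n.
move=> Ms phi N dt rho rt u M p q hNf dt0 hC hc rho0 hrt _ M1 hM p1 q1 pq.
set f2 := derive1 (derive1 phi).
set S := sup_phi2 phi M.
set CM := C_mesh Ms.
have p0 : 0 < p by lra.
have q0 : 0 < q by lra.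
have M0 : 0 < M by lra.
have iM1 : M^-1 <= 1 by rewrite invf_le1 // ltW.
have S0 : 0 <= S.
  apply: le_trans (@d2_ge0 _ phi hC hc 1 ltr01) (@le_sup_phi2 _ phi M 1 hC M1 _).
  by rewrite iM1 ltW.
have CM0 : 0 <= CM := C_mesh_ge0 Ms.
pose ind (K : cell Ms) (s : face Ms) : R := (s \in faces K)%:R.
pose a (n : nat) (K : cell Ms) := `|rho n.+1 K - rho n K|.
pose b (i : 'I_d) (n : nat) (K : cell Ms) (s s' : face Ms) :=
  `|(u n s i - u n s' i) / diam K|.
pose w (n : nat) (K : cell Ms) (s s' : face Ms) := dt * vol K * ind K s * ind K s'.
pose SIG (F : 'I_d -> 'I_N -> cell Ms -> face Ms -> face Ms -> R) :=
  \sum_i \sum_n \sum_K \sum_s \sum_s' F i n K s s'.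
have hb : forall m K, (m <= N)%N -> M^-1 <= rho m K /\ rho m K <= M.
  move=> m K hm; have [h1 h2] := hM m K hm; split => //.
  by rewrite -[rho m K]invrK lef_pV2 ?posrE ?invr_gt0.
have step1 : L1norm N dt (R01 f2 rho rt u) <=
   S * M * CM * SIG (fun i n K s s' => w n K s s' * a n K * b i n K s s').
  have -> : SIG (fun i n K s s' => w n K s s' * a n K * b i n K s s') =
    \sum_(n < N) \sum_K \sum_i \sum_s \sum_s' w n K s s' * a n K * b i n K s s'.
    by rewrite /SIG exchange_big; apply: eq_bigr => n _; rewrite exchange_big.
  rewrite /L1norm.
  rewrite mulr_sumr; apply: ler_sum => n _.
  rewrite mulr_sumr [X in _ <= X]mulr_sumr; apply: ler_sum => K _.
  set S3 := \sum_i \sum_s \sum_s' ind K s * ind K s' * b i n K s s'.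
  have e3 : \sum_i \sum_s \sum_s' w n K s s' * a n K * b i n K s s' =
      dt * vol K * a n K * S3.
    rewrite /S3 mulr_sumr; apply: eq_bigr => i _; rewrite mulr_sumr.
    apply: eq_bigr => s _; rewrite mulr_sumr; apply: eq_bigr => s' _.
    by rewrite /w; ring.
  rewrite e3.
  have v0 := vol_gt0 K.
  set Sig := \sum_(s in faces K) area s * unorm (u n) K s.
  have hR : vol K * `|R01 f2 rho rt u n K| =
      `|f2 (rt n K)| * a n K * `|rho n K| * `|Sig|.
    rewrite /R01 !normrM normfV (gtr0_norm v0) /a -/Sig; field; exact: lt0r_neq0.
  rewrite hR.
  have hn := ltn_ord n.
  have [r1 r2] := hb n K (ltnW hn).
  have [r3 r4] := hb n.+1 K hn.
  have /andP[t1 t2] := hrt n K hn.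
  have rt1 : M^-1 <= rt n K by apply: le_trans t1; rewrite le_min r1 r3.
  have rt2 : rt n K <= M by apply: le_trans t2 _; rewrite ge_max r2 r4.
  have rtp : 0 < rt n K by apply: lt_le_trans rt1; rewrite invr_gt0.
  have hf : `|f2 (rt n K)| <= S.
    rewrite ger0_norm; last exact: (@d2_ge0 _ phi hC hc _ rtp).
    by apply: (@le_sup_phi2 _ phi M _ hC M1); rewrite rt1 rt2.
  have hrho : `|rho n K| <= M by rewrite gtr0_norm.
  have hS := @cell_bound _ _ Ms K (u n); rewrite -/Sig -/CM in hS.
  have S30 : 0 <= S3.
    apply: sumr_ge0 => i _; apply: sumr_ge0 => s _; apply: sumr_ge0 => s' _.
    by rewrite /ind /b !mulr_ge0 ?ler0n ?normr_ge0.
  have a0 : 0 <= a n K by exact: normr_ge0.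
  apply: (@le_trans _ _ (dt * (S * a n K * M * (CM * vol K * S3)))).
    apply: ler_wpM2l; first exact: ltW.
    apply: ler_pM; rewrite ?normr_ge0 ?mulr_ge0 //.
    apply: ler_pM; rewrite ?normr_ge0 ?mulr_ge0 //.
    apply: ler_pM; rewrite ?normr_ge0 ?mulr_ge0 //.
  rewrite le_eqVlt; apply/orP; left; apply/eqP; ring.
have HH : SIG (fun i n K s s' => w n K s s' * a n K * b i n K s s') <=
   (SIG (fun i n K s s' => w n K s s' * a n K `^ p)) `^ p^-1 *
   (SIG (fun i n K s s' => w n K s s' * b i n K s s' `^ q)) `^ q^-1.
  rewrite /SIG !nest5; apply: holder_fin => //.
  - by move=> x; rewrite /w /ind !mulr_ge0 ?ler0n // ltW ?vol_gt0.
  - by move=> x; exact: normr_ge0.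
  - by move=> x; exact: normr_ge0.
have ind0 : forall K s, 0 <= ind K s by move=> K s; rewrite /ind ler0n.
have w0 : forall n K s s', 0 <= w n K s s'.
  by move=> n K s s'; rewrite /w !mulr_ge0 // ltW ?vol_gt0.
have cardF : forall K, \sum_s ind K s = #|faces K|%:R.
  move=> K; transitivity (\sum_(s in faces K) (1:R)); last by rewrite sumr_const.
  by rewrite sum_ind; apply: eq_bigr => s _; rewrite mulr1.
have tBV0 : 0 <= tBV N rho.
  by apply: sumr_ge0 => n _; apply: sumr_ge0 => K _; rewrite mulr_ge0 // ltW ?vol_gt0.
have HA : SIG (fun i n K s s' => w n K s s' * a n K `^ p) <=
    (Nf * Nf * d)%:R * M `^ (p - 1) * dt * tBV N rho.
  have inner : forall (n : 'I_N) K, \sum_s \sum_s' w n K s s' * a n K `^ p <=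
      (Nf * Nf)%:R * M `^ (p - 1) * dt * (vol K * a n K).
    move=> n K.
    have e : \sum_s \sum_s' w n K s s' * a n K `^ p =
        dt * vol K * a n K `^ p * ((\sum_s ind K s) * (\sum_s' ind K s')).
      rewrite big_distrlr mulr_sumr; apply: eq_bigr => s _.
      rewrite mulr_sumr; apply: eq_bigr => s' _; rewrite /w /=; ring.
    rewrite e !cardF.
    have hn := ltn_ord n.
    have [r1 r2] := hb n K (ltnW hn).
    have [r3 r4] := hb n.+1 K hn.
    have p1' : 0 <= p - 1 by rewrite subr_ge0.
    have a0 : 0 <= a n K by exact: normr_ge0.
    have aM : a n K <= M.
      exact: absdiff_le (rho0 n.+1 K) (rho0 n K) r4 r2.
    have h1 : a n K `^ p <= M `^ (p - 1) * a n K.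
      rewrite -(mulr_powRB1 a0 p0) mulrC ler_wpM2r //.
      by apply: ge0_ler_powR; rewrite // nnegrE // ltW.
    have h2 : #|faces K|%:R * #|faces K|%:R <= (Nf * Nf)%:R :> R.
      by rewrite -natrM ler_nat leq_mul.
    have v0 := vol_gt0 K.
    apply: (@le_trans _ _ (dt * vol K * (M `^ (p - 1) * a n K) * (Nf * Nf)%:R)).
      have dv0 : 0 <= dt * vol K by rewrite mulr_ge0 // ltW.
      apply: ler_pM.
      - exact: mulr_ge0 dv0 (powR_ge0 _ _).
      - by rewrite mulr_ge0 ?ler0n.
      - apply: (ler_wpM2l dv0). exact: h1.
      - exact: h2.
    rewrite le_eqVlt; apply/orP; left; apply/eqP; ring.
  apply: (@le_trans _ _ (\sum_(i < d) ((Nf * Nf)%:R * M `^ (p - 1) * dt * tBV N rho))).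
    apply: ler_sum => i _; rewrite /tBV mulr_sumr; apply: ler_sum => n _.
    rewrite mulr_sumr; apply: ler_sum => K _; exact: inner.
  rewrite sumr_const card_ord -mulr_natl !natrM.
  rewrite le_eqVlt; apply/orP; left; apply/eqP; ring.
pose Winner := \sum_(i < d) \sum_(n < N.+1) dt * \sum_(K : cell Ms)
      \sum_(s in faces K) \sum_(s' in faces K)
        vol K * (`|(u n s i - u n s' i) / diam K| `^ q).
have HB : SIG (fun i n K s s' => w n K s s' * b i n K s s' `^ q) <= Winner.
  rewrite /SIG /Winner; apply: ler_sum => i _.
  rewrite big_ord_recr /= -[X in X <= _]addr0; apply: lerD.
    apply: ler_sum => n _; rewrite le_eqVlt; apply/orP; left; apply/eqP.
    rewrite mulr_sumr; apply: eq_bigr => K _; rewrite sum_ind mulr_sumr.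
    apply: eq_bigr => s _; rewrite sum_ind mulr_sumr mulr_sumr.
    apply: eq_bigr => s' _; rewrite /w /b /=; ring.
  apply: mulr_ge0; first exact: ltW dt0.
  apply: sumr_ge0 => K _; apply: sumr_ge0 => s _.
  by apply: sumr_ge0 => s' _; rewrite mulr_ge0 ?powR_ge0 // ltW ?vol_gt0.
set A := SIG (fun i n K s s' => w n K s s' * a n K `^ p) in HH HA *.
set B := SIG (fun i n K s s' => w n K s s' * b i n K s s' `^ q) in HH HB *.
have A0 : 0 <= A.
  rewrite /A /SIG nest5; apply: sumr_ge0 => x _; exact: mulr_ge0 (w0 _ _ _ _) (powR_ge0 _ _).
have B0 : 0 <= B.
  rewrite /B /SIG nest5; apply: sumr_ge0 => x _; exact: mulr_ge0 (w0 _ _ _ _) (powR_ge0 _ _).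
have W0 : 0 <= Winner := le_trans B0 HB.
have eW : W1q_norm N dt q u = Winner `^ q^-1 by rewrite /W1q_norm /Winner div1r.
set X : R := (Nf * Nf * d)%:R in HA *.
set T := tBV N rho in HA tBV0 *.
have X0 : 0 <= X by rewrite /X ler0n.
have Mp0 : 0 <= M `^ (p - 1) := powR_ge0 _ _.
have dt0' : 0 <= dt := ltW dt0.
have ip0 : 0 <= p^-1 by rewrite invr_ge0 ltW.
have iq0 : 0 <= q^-1 by rewrite invr_ge0 ltW.
have hAp : A `^ p^-1 <= (X * M `^ (p - 1) * dt * T) `^ p^-1.
  apply: (ge0_ler_powR ip0); rewrite ?nnegrE //.
  by rewrite !mulr_ge0.
have hBq : B `^ q^-1 <= Winner `^ q^-1.
  by apply: (ge0_ler_powR iq0); rewrite ?nnegrE.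
have eA : (X * M `^ (p - 1) * dt * T) `^ p^-1 =
    X `^ p^-1 * M `^ ((p - 1) * p^-1) * dt `^ p^-1 * T `^ p^-1.
  rewrite (powRM _ (mulr_ge0 (mulr_ge0 X0 Mp0) dt0') tBV0).
  rewrite (powRM _ (mulr_ge0 X0 Mp0) dt0') (powRM _ X0 Mp0) -powRrM.
  by [].
have ip1 : p^-1 <= 1 by rewrite invf_le1.
have hXP : X `^ p^-1 <= (Nf * Nf * d).+1%:R.
  apply: (@le_trans _ _ ((Nf * Nf * d).+1%:R `^ p^-1)).
    by apply: (ge0_ler_powR ip0); rewrite ?nnegrE ?ler0n // /X ler_nat.
  by apply: ler1_powR => //; rewrite ler1n.
have eM : M `^ ((2 * p - 1) / p) = M * M `^ ((p - 1) * p^-1).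
  have -> : (2 * p - 1) / p = 1 + (p - 1) * p^-1 by field; exact: lt0r_neq0.
  by rewrite powRD ?powRr1 ?(ltW M0) // (lt0r_neq0 M0) implybT.
apply: le_trans step1 _.
have SMC0 : 0 <= S * M * CM by rewrite !mulr_ge0 // ltW.
apply: (@le_trans _ _ (S * M * CM * (A `^ p^-1 * B `^ q^-1))).
  apply: (ler_wpM2l SMC0); exact: HH.
apply: (@le_trans _ _ (S * M * CM * ((X `^ p^-1 * M `^ ((p - 1) * p^-1) *
    dt `^ p^-1 * T `^ p^-1) * Winner `^ q^-1))).
  apply: (ler_wpM2l SMC0); apply: ler_pM; rewrite ?powR_ge0 //.
  by rewrite -eA.
rewrite eM eW !div1r.
set Rest := S * M * CM * (M `^ ((p - 1) * p^-1) * dt `^ p^-1 * T `^ p^-1 * Winner `^ q^-1).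
have Rest0 : 0 <= Rest by rewrite /Rest; apply: (mulr_ge0 SMC0); rewrite !mulr_ge0 ?powR_ge0.
have -> : S * M * CM * (X `^ p^-1 * M `^ ((p - 1) * p^-1) * dt `^ p^-1 * T `^ p^-1 *
    Winner `^ q^-1) = X `^ p^-1 * Rest by rewrite /Rest; ring.
have -> : (Nf * Nf * d).+1%:R * CM * (M * M `^ ((p - 1) * p^-1)) * S * T `^ p^-1 *
    Winner `^ q^-1 * dt `^ p^-1 = (Nf * Nf * d).+1%:R * Rest by rewrite /Rest; ring.
apply: (ler_wpM2r Rest0); exact: hXP.
Qed.
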